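(* Let $K$ be a fan-like simplicial sphere of dimension $n-1$ with at most $n+3$ vertices. Then any real topological toric manifold over $K$ can be realized as the fixed point set of the conjugation of a topological toric manifold. Equivalently, for every non-singular characteristic map $\lambda:V(K)\to\mathbb{Z}_2^n$ over $\mathbb{Z}_2$ there is a non-singular characteristic map $\widetilde\lambda:V(K)\to\mathbb{Z}^n$ whose reduction modulo $2$ is $\lambda$.
   Context: A simplicial $(n-1)$-sphere $K$ is fan-like if it underlies a complete simplicial fan in $\mathbb{R}^n$. A characteristic map over $\mathbb{Z}_2$, $\lambda:V(K)\to\mathbb{Z}_2^n$, is non-singular if the vectors on every face of $K$ are linearly independent over $\mathbb{Z}_2$; a characteristic map $\widetilde\lambda:V(K)\to\mathbb{Z}^n$ is non-singular if the vectors on every face are part of a $\mathbb{Z}$-basis of $\mathbb{Z}^n$. Topological toric manifolds (as $T^n$-manifolds, with omniorientation) over $K$ correspond to complete non-singular characteristic maps over $\mathbb{Z}$ on $K$, real topological toric manifolds over $K$ correspond to non-singular characteristic maps over $\mathbb{Z}_2$ on $K$, and the fixed point set of the conjugation on the topological toric manifold of $\widetilde\lambda$ is the real topological toric manifold of the mod $2$ reduction of $\widetilde\lambda$. *)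

(* Defs.v *)
From HB Require Import structures.
From mathcomp Require Import all_boot all_order all_algebra.
From mathcomp Require Import Rstruct.
From Stdlib Require Import Reals.
Set Implicit Arguments. Unset Strict Implicit. Unset Printing Implicit Defensive.
Import Order.TTheory GRing.Theory Num.Theory.
Local Open Scope ring_scope.

(* A finite simplicial complex on the vertex set V: a down-closed family of
   faces containing every singleton (so the vertex set V(K) is all of V). *)
Definition simplicial_complex (V : finType) (K : {set {set V}}) : Prop :=
  (forall s t : {set V}, s \in K -> t \subset s -> t \in K) /\
  (forall v : V, [set v] \in K).

Definition lin_indep (F : fieldType) (V : finType) (n : nat)
    (S : {set V}) (x : V -> 'rV[F]_n) : Prop :=
  forall c : V -> F, \sum_(v in S) c v *: x v = 0 -> forall v, v \in S -> c v = 0.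

Definition in_cone (V : finType) (n : nat) (S : {set V})
    (x : V -> 'rV[Rdefinitions.R]_n) (p : 'rV[Rdefinitions.R]_n) : Prop :=
  exists a : V -> Rdefinitions.R,
    (forall v, v \in S -> 0 <= a v) /\ p = \sum_(v in S) a v *: x v.

(* K underlies a complete simplicial fan in R^n: there are ray generators
   w v such that each face spans a simplicial cone, the cones of two faces
   intersect in the cone of the common face, and the cones cover R^n. *)
Definition fan_like (V : finType) (K : {set {set V}}) (n : nat) : Prop :=
  exists w : V -> 'rV[Rdefinitions.R]_n,
    (forall s, s \in K -> lin_indep s w) /\
    (forall s t, s \in K -> t \in K -> forall p,
        in_cone s w p -> in_cone t w p -> in_cone (s :&: t) w p) /\
    (forall p, exists2 s, s \in K & in_cone s w p).

Definition nonsingular_F2 (V : finType) (K : {set {set V}}) (n : nat)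
    (lam : V -> 'rV['F_2]_n) : Prop :=
  forall s, s \in K -> lin_indep s lam.

(* Non-singular characteristic map over Z: the vectors on every face are
   part of a Z-basis of Z^n (rows of an invertible integer matrix). *)
Definition nonsingular_Z (V : finType) (K : {set {set V}}) (n : nat)
    (lam : V -> 'rV[int]_n) : Prop :=
  forall s, s \in K ->
    exists (M : 'M[int]_n) (f : V -> 'I_n),
      M \in unitmx /\ {in s &, injective f} /\
      (forall v, v \in s -> row (f v) M = lam v).

Definition mod2 (n : nat) (x : 'rV[int]_n) : 'rV['F_2]_n :=
  map_mx (fun z : int => z%:~R) x.

(* Main.v *)
Require Import Defs.
From mathcomp Require Import all_boot all_order all_algebra.
From mathcomp Require Import fingroup perm zify Rstruct.
Import Order.TTheory GRing.Theory Num.Theory.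
Set Implicit Arguments. Unset Strict Implicit. Unset Printing Implicit Defensive.
Local Open Scope ring_scope.

Lemma det1b (f : nat -> nat -> bool) : `|\det (\matrix_(i, j) (f i j)%:R : 'M[int]_1)| <= 2.
Proof. by rewrite det_mx11 mxE; case: (f _ _). Qed.

Lemma det2b (f : nat -> nat -> bool) : `|\det (\matrix_(i, j) (f i j)%:R : 'M[int]_2)| <= 2.
Proof.
rewrite (expand_det_row _ 0) !big_ord_recl big_ord0 /cofactor.
rewrite !det_mx11 !mxE /bump /=.
case: (f 0 0); case: (f 1 1); case: (f 0 1); case: (f 1 0).
all: vm_compute; reflexivity.
Qed.

Lemma det3b (f : nat -> nat -> bool) : `|\det (\matrix_(i, j) (f i j)%:R : 'M[int]_3)| <= 2.
Proof.
rewrite (expand_det_row _ 0) !big_ord_recl big_ord0 /cofactor.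
rewrite !(expand_det_row _ 0) !big_ord_recl !big_ord0 /cofactor.
rewrite !det_mx11 !mxE /bump /=.
case: (f 0 0); case: (f 1 1); case: (f 2 2); case: (f 1 2); case: (f 2 1); case: (f 0 1); case: (f 1 0); case: (f 2 0); case: (f 0 2).
all: vm_compute; reflexivity.
Qed.

Definition zo n (M : 'M[int]_n) := forall i j, M i j = 0 \/ M i j = 1.

Lemma zo_mat n (M : 'M[int]_n.+1) : zo M ->
  M = \matrix_(i, j) (M (inord i) (inord j) == 1)%:R.
Proof.
move=> H; apply/matrixP => i j; rewrite mxE !inord_val.
by case: (H i j) => ->.
Qed.

Lemma det_small n (M : 'M[int]_n) : (n <= 3)%N -> zo M -> `|\det M| <= 2.
Proof.
case: n M => [|[|[|[|n]]]] M // _ H.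
- by rewrite det_mx00.
- rewrite (zo_mat H); exact: (det1b (fun i j => M (inord i) (inord j) == 1)).
- rewrite (zo_mat H); exact: (det2b (fun i j => M (inord i) (inord j) == 1)).
- rewrite (zo_mat H); exact: (det3b (fun i j => M (inord i) (inord j) == 1)).
Qed.

Definition light n (M : 'M[int]_n) i :=
  forall j1 j2, M i j1 != 0 -> M i j2 != 0 -> j1 = j2.

Lemma det_bound n (M : 'M[int]_n) (H : {set 'I_n}) :
  zo M -> (#|H| <= 3)%N -> (forall i, i \notin H -> light M i) -> `|\det M| <= 2.
Proof.
elim: n M H => [|n IH] M H zM cH lM.
  by rewrite det_mx00.
case: (pickP [pred i | i \notin H]) => [i /= Hi | allH]; last first.
  apply: det_small zM.
  have HT : H = setT by apply/setP => i; rewrite inE; have := allH i => /= /negbFE.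
  by rewrite HT cardsT card_ord in cH.
have li := lM i Hi.
case: (pickP [pred j | M i j != 0]) => [j /= Mij | zr]; last first.
  rewrite (expand_det_row _ i) big1 ?normr0 // => k _.
  by have := zr k => /= /negbFE /eqP ->; rewrite mul0r.
have Mij1 : M i j = 1 by case: (zM i j) Mij => ->; rewrite ?eqxx.
rewrite (expand_det_row _ i) (bigD1 j) //= big1 ?addr0; last first.
  move=> k kj; have : M i k = 0.
    by apply/eqP; apply: contraNT kj => /li /(_ Mij) ->.
  by move=> ->; rewrite mul0r.
rewrite Mij1 mul1r /cofactor normrM normrX normrN1 expr1n mul1r.
apply: (IH _ [set k | lift i k \in H]).
- by move=> k l; rewrite !mxE.
- apply: leq_trans cH.
  rewrite -(card_imset _ (@lift_inj _ i)) subset_leq_card //.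
  by apply/subsetP => x /imsetP [k]; rewrite inE => kH ->.
- move=> k; rewrite inE => kH j1 j2; rewrite !mxE => h1 h2.
  exact: (lift_inj (lM _ kH _ _ h1 h2)).
Qed.

Lemma det_unit n (M : 'M[int]_n) (H : {set 'I_n}) :
  zo M -> (#|H| <= 3)%N -> (forall i, i \notin H -> light M i) ->
  (\det M)%:~R != 0 :> 'F_2 -> M \in unitmx.
Proof.
move=> zM cH lM; have := det_bound zM cH lM.
rewrite unitmxE; move: (\det M) => d hd.
have : d = 0 \/ d = 1 \/ d = -1 \/ d = 2 \/ d = -2 by lia.
by case=> [->|[->|[->|[->|->]]]] //; rewrite ?unitrN1 ?unitr1 //; vm_compute.
Qed.


Section Exch.
Variables (F : fieldType) (V : finType) (n : nat) (y : V -> 'rV[F]_n).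
Variables (s sg : {set V}) (gi : V -> 'I_n).
Hypothesis indep : lin_indep s y.
Hypothesis Hg : {in sg &, injective gi}.
Hypothesis Hy : forall v, v \in sg -> y v = delta_mx 0 (gi v).

Definition repl (W : 'M[F]_n) i (z : 'rV_n) :=
  \matrix_(k, l) if k == i then z 0 l else W k l.

Lemma det_repl W i z : \det (repl W i z) = (z *m \adj W) 0 i.
Proof.
rewrite (expand_det_row _ i) !mxE; apply: eq_bigr => k _.
rewrite !mxE eqxx; congr (_ * _).
rewrite /cofactor; congr (_ * \det _); apply/matrixP => a b.
have /negbTE ha : lift i a != i by rewrite eq_sym neq_lift.
by rewrite !mxE ha.
Qed.

Definition plc (L : seq V) := [set v in s | (v \in sg) || (v \in L)].

Definition inv (L : seq V) (W : 'M[F]_n) (pos : V -> 'I_n) :=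
 [/\ \det W != 0,
  forall v, v \in plc L -> row (pos v) W = y v,
  {in plc L &, injective pos},
  forall j, (forall v, v \in L -> pos v != j) -> row j W = delta_mx 0 j &
  forall v, v \in sg -> pos v = gi v].

Lemma inv_nil : inv [::] 1%:M gi.
Proof.
split.
- by rewrite det1 oner_neq0.
- by move=> v; rewrite inE /= orbF => /andP [_ vs]; rewrite row1 Hy.
- by move=> u v; rewrite !inE /= !orbF => /andP [_ us] /andP [_ vs]; apply: Hg.
- by move=> j _; rewrite row1.
- by [].
Qed.

Lemma inv_cons L W pos b : b \in s -> b \notin sg -> b \notin L -> inv L W pos ->
  exists W' pos', inv (b :: L) W' pos'.
Proof.
move=> bs bsg bL [dW rW ipos eW gpos].
set P := plc L.
have bP : b \notin P by rewrite inE bs /= (negbTE bsg) (negbTE bL).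
set c := y b *m \adj W.
have /existsP [j /andP [/forallP jP cj]] : [exists j, [forall v, (v \in P) ==> (pos v != j)] && (c 0 j != 0)].
  apply/contraT => /negP hne.
  have cz : forall j, j \notin pos @: P -> c 0 j = 0.
    move=> j jn; apply/eqP; apply/contraT => cj; exfalso; apply: hne; apply/existsP; exists j.
    rewrite cj andbT; apply/forallP => v; apply/implyP => vP.
    by apply: contraNneq jn => <-; apply: imset_f.
  pose d v := if v \in P then c 0 (pos v) else if v == b then - \det W else 0.
  have cW : c *m W = \det W *: y b.
    by rewrite /c -mulmxA mul_adj_mx mul_mx_scalar.
  have S1 : c *m W = \sum_(v in P) d v *: y v.
    rewrite mulmx_sum_row (bigID (fun j => j \in pos @: P)) /=.
    rewrite [X in _ + X]big1 ?addr0; last first.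
      by move=> j jn; rewrite cz // scale0r.
    rewrite big_imset //=; apply: eq_bigr => v vP.
    by rewrite /d vP rW.
  have : \sum_(v in s) d v *: y v = 0.
    rewrite (bigID (fun v => v \in P)) /=.
    have -> : \sum_(i in s | i \in P) d i *: y i = \sum_(v in P) d v *: y v.
      apply: eq_bigl => v; apply/andP/idP => [[] //| vP]; split => //.
      by move: vP; rewrite inE => /andP [].
    rewrite [X in _ + X](bigD1 b) /=; last by rewrite bs bP.
    rewrite [X in _ + (_ + X)]big1; last first.
      move=> v /andP [/andP [_ vP] vb]; rewrite /d (negbTE vP) (negbTE vb).
      by rewrite scale0r.
    by rewrite -S1 cW /d (negbTE bP) eqxx addr0 scaleNr subrr.
  move/indep => /(_ b bs); rewrite /d (negbTE bP) eqxx => /eqP.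
  by rewrite oppr_eq0 (negbTE dW).
pose W' := repl W j (y b).
pose pos' v := if v == b then j else pos v.
have jP' : forall v, v \in P -> pos v != j by move=> v vP; have := jP v; rewrite vP.
exists W', pos'; split.
- by rewrite det_repl.
- move=> v; rewrite inE in_cons => /andP [vs].
  rewrite /pos'; case: (v =P b) => [-> _ | /eqP vb /= vin].
    by apply/rowP => l; rewrite !mxE eqxx.
  have vP : v \in P by rewrite inE vs.
  apply/rowP => l; rewrite !mxE (negbTE (jP' v vP)).
  by rewrite -rW // mxE.
- move=> u v; rewrite !inE /pos' => /andP [us uin] /andP [vs vin].
  case: (u =P b) => [->|/eqP ub]; case: (v =P b) => [->|/eqP vb] //.
  + move=> ej; have vP : v \in P by rewrite inE vs; move: vin; rewrite (negbTE vb).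
    by have := jP' v vP; rewrite ej eqxx.
  + move=> ej; have uP : u \in P by rewrite inE us; move: uin; rewrite (negbTE ub).
    by have := jP' u uP; rewrite -ej eqxx.
  + apply: ipos; rewrite inE ?us ?vs /=.
      by move: uin; rewrite (negbTE ub).
    by move: vin; rewrite (negbTE vb).
- move=> k kn.
  have kj : k != j by rewrite eq_sym; have := kn b (mem_head _ _); rewrite /pos' eqxx.
  have ek : row k W = delta_mx 0 k.
    apply: eW => v vL; have := kn v; rewrite in_cons vL orbT /pos'.
    by case: (v =P b) => [vb|_]; [move: bL; rewrite -vb vL | apply].
  by apply/rowP => l; move/rowP: ek => /(_ l); rewrite !mxE (negbTE kj).
- move=> v vsg; rewrite /pos'; case: (v =P b) => [vb|_]; last exact: gpos.
  by move: bsg; rewrite -vb vsg.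
Qed.

Lemma inv_all L : uniq L -> {subset L <= s :\: sg} -> exists W pos, inv L W pos.
Proof.
elim: L => [|b L IH] /=; first by move=> _ _; exists 1%:M, gi; exact: inv_nil.
move=> /andP [bL uL] sub.
have [W [pos h]] : exists W pos, inv L W pos by apply: IH uL _ => x xL; apply: sub; rewrite in_cons xL orbT.
have := sub b (mem_head _ _); rewrite inE => /andP [bsg bs].
exact: inv_cons bs bsg bL h.
Qed.

End Exch.


Definition l2 (a : 'F_2) : int := (nat_of_ord a)%:Z.
Notation r2 := (@intmul 'F_2 1).

Lemma F2_cases (a : 'F_2) : a = 0 \/ a = 1.
Proof. by case: a => [[|[|k]] Hk] //; [left|right]; apply/val_inj. Qed.

Lemma l2K (a : 'F_2) : r2 (l2 a) = a.
Proof. by case: (F2_cases a) => ->. Qed.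

Lemma l20 : l2 0 = 0. Proof. by []. Qed.
Lemma l21 : l2 1 = 1. Proof. by []. Qed.

Lemma F2_neq0 (a : 'F_2) : a != 0 -> a = 1.
Proof. by case: (F2_cases a) => ->. Qed.

Lemma map_l2K m n (M : 'M['F_2]_(m, n)) : map_mx r2 (map_mx l2 M) = M.
Proof. by apply/matrixP => i j; rewrite !mxE l2K. Qed.

Lemma det_r2 n (M : 'M[int]_n) : \det (map_mx r2 M) = r2 (\det M).
Proof. exact: det_map_mx. Qed.

Lemma lift_unit n (Q : 'M['F_2]_n) : Q \in unitmx ->
  exists Qt : 'M[int]_n, Qt \in unitmx /\ map_mx r2 Qt = Q.
Proof.
case: n Q => [|n] Q uQ.
  exists 1%:M; split; first by rewrite unitmxE det_mx00 unitr1.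
  by apply/matrixP => [[]].
have := cormen_lup_correct Q; have := cormen_lup_perm Q.
have := cormen_lup_detL Q.
have := @cormen_lup_lower _ _ Q; have := @cormen_lup_upper _ _ Q.
case: (cormen_lup Q) => [[P L] U] /= Uup Llow dL /is_perm_mxP [s ->] eq.
have trL : is_trig_mx (map_mx l2 L).
  apply/is_trig_mxP => i j ij; rewrite mxE Llow ?(ltnW ij) //.
  by have /negbTE -> : i != j by apply: contraTneq ij => ->; rewrite ltnn.
have trU : is_trig_mx (map_mx l2 U)^T.
  by apply/is_trig_mxP => i j ij; rewrite !mxE Uup.
have detU : \det U != 0.
  have := congr1 determinant eq; rewrite !detM det_perm => eq'.
  rewrite dL mul1r in eq'; rewrite -eq' mulf_neq0 //.
    by rewrite signr_eq0.
  by rewrite -unitfE -unitmxE.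
have Uii : forall i, U i i = 1.
  move=> i; apply: F2_neq0; move: detU.
  have : is_trig_mx U^T by apply/is_trig_mxP => a b ab; rewrite mxE Uup.
  move/det_trig; rewrite det_tr => ->.
  rewrite (bigD1 i) //= mxE; apply: contraNneq => ->; by rewrite mul0r.
exists (perm_mx (s^-1)%g *m map_mx l2 L *m map_mx l2 U); split.
  rewrite !unitmx_mul !unitmxE det_perm unitrX ?unitrN1 //=.
  rewrite (det_trig trL) -(det_tr (map_mx l2 U)) (det_trig trU).
  by rewrite !big1 ?unitr1 // => i _; rewrite !mxE ?Uii ?Llow ?eqxx.
rewrite !map_mxM map_perm_mx !map_l2K -mulmxA !mulmxE -eq mulrA -mulmxE.
by rewrite -perm_mxM mulVg perm_mx1 mul1mx.
Qed.


Section Fan.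
Variables (V : finType) (n : nat) (w : V -> 'rV[Rdefinitions.R]_n).
Local Notation R := Rdefinitions.R.

Lemma one_face (s : {set V}) : (#|s| < n)%N ->
  exists2 a : 'rV[R]_n, a != 0 & forall v, v \in s -> \sum_l a 0 l * w v 0 l = 0.
Proof.
move=> sn.
pose Ws := \matrix_(i < #|s|) w (enum_val i).
have : kermx Ws^T != 0.
  rewrite -mxrank_eq0 mxrank_ker mxrank_tr -lt0n subn_gt0.
  exact: leq_ltn_trans (rank_leq_row _) sn.
case/rowV0Pn => a /sub_kermxP aW a0; exists a => // v vs.
move/rowP: aW => /(_ (enum_rank_in vs v)); rewrite !mxE => h; rewrite -[RHS]h.
by apply: eq_bigr => l _; rewrite !mxE enum_rankK_in.
Qed.

Lemma nonroot (P : {poly R}) : P != 0 -> exists t, P.[t] != 0.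
Proof.
move=> P0; set rs := [seq i%:R | i <- iota 0 (size P)] : seq R.
case: (@hasP _ (fun t => P.[t] != 0) rs) => [[t _ ht]|hno]; first by exists t.
have := @max_poly_roots _ P rs P0.
rewrite size_map size_iota ltnn => h; suff: false by []; apply: h.
  by apply/allP => x xr; apply/negPn/negP => hx; apply: hno; exists x.
rewrite map_inj_uniq ?iota_uniq // => i j /eqP; rewrite eqr_nat => /eqP.
by [].
Qed.

Lemma face_poly (s : {set V}) : (#|s| < n)%N -> exists2 p : {poly R}, p != 0 &
  forall t, p.[t] != 0 -> ~ in_cone s w (\row_(i < n) t ^+ i).
Proof.
move=> sn; have [a a0 ha] := one_face sn.
pose ae (i : nat) := oapp (fun j : 'I_n => a 0 j) 0 (insub i).
have aeE : forall j : 'I_n, ae j = a 0 j by move=> j; rewrite /ae valK.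
exists (\poly_(i < n) ae i).
  case/rV0Pn: a0 => l al; apply: contraNneq al.
  by move/(congr1 (fun p : {poly R} => p`_l)); rewrite coef_poly ltn_ord coef0 aeE => ->.
move=> t pt [c [_ xeq]]; move/negP: pt; apply.
rewrite horner_poly.
have -> : \sum_(i < n) ae i * t ^+ i = \sum_(i < n) a 0 i * (\row_(i < n) t ^+ i) 0 i.
  by apply: eq_bigr => i _; rewrite mxE aeE.
rewrite xeq.
under eq_bigr => i _ do rewrite summxE mulr_sumr.
rewrite exchange_big /= big1 // => v vs.
under eq_bigr => i _ do rewrite mxE mulrCA.
by rewrite -mulr_sumr ha // mulr0.
Qed.

Lemma avoid (L : seq {set V}) : (forall s, s \in L -> #|s| < n)%N ->
  exists2 P : {poly R}, P != 0 &
  forall t, P.[t] != 0 -> forall s, s \in L -> ~ in_cone s w (\row_(i < n) t ^+ i).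
Proof.
elim: L => [|s L IH] hL; first by exists 1; rewrite ?oner_neq0.
have [p p0 hp] := face_poly (hL s (mem_head _ _)).
have [|P P0 hP] := IH; first by move=> u uL; apply: hL; rewrite in_cons uL orbT.
exists (p * P); first by rewrite mulf_neq0.
move=> t; rewrite hornerM mulf_eq0 negb_or => /andP [pt Pt] u.
rewrite in_cons => /orP [/eqP -> | uL]; first exact: hp.
exact: hP.
Qed.

Lemma big_face (K : {set {set V}}) :
  (forall s, s \in K -> lin_indep s w) ->
  (forall p, exists2 s, s \in K & in_cone s w p) ->
  exists2 s, s \in K & (n <= #|s|)%N.
Proof.
move=> _ cov.
case: (@hasP _ (fun s : {set V} => (n <= #|s|)%N) (enum K)) => [[s sK hs]|hno].
  by exists s; rewrite ?mem_enum in sK *.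
have [P P0 hP] : exists2 P : {poly R}, P != 0 &
  forall t, P.[t] != 0 -> forall s, s \in enum K -> ~ in_cone s w (\row_(i < n) t ^+ i).
  apply: avoid => s sK; rewrite ltnNge; apply/negP => h; apply: hno; by exists s.
have [t Pt] := nonroot P0.
have [s sK hs] := cov (\row_(i < n) t ^+ i).
by case: (hP t Pt s); rewrite ?mem_enum.
Qed.
End Fan.


Unset Implicit Arguments.

Theorem corollary9p3 (V : finType) (n : nat) (K : {set {set V}}) :
  simplicial_complex K -> fan_like K n -> (#|V| <= n + 3)%N ->
  forall lam : V -> 'rV['F_2]_n, nonsingular_F2 K lam ->
  exists lamt : V -> 'rV[int]_n,
    nonsingular_Z K lamt /\ (forall v, mod2 (lamt v) = lam v).
Proof.
move=> [dc sing] [w [hind [_ cov]]] cV lam ns.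
case: n w hind cov cV lam ns => [|n] w hind cov cV lam ns.
  have V0 : forall v : V, False.
    move=> v; have := ns _ (sing v) (fun _ => 1).
    by move=> /(_ (thinmx0 _) v (set11 v)) /eqP; rewrite oner_eq0.
  exists (fun _ => 0); split => [s sK|v]; last by case: (V0 v).
  exists 1%:M, (fun v => match V0 v with end); split.
    by rewrite unitmxE det1 unitr1.
  by split => [u|u]; case: (V0 u).
have [s0 s0K hs0] := big_face hind cov.
pose g (i : 'I_n.+1) : V := enum_val (widen_ord hs0 i).
have g_inj : injective g.
  by move=> i j /enum_val_inj /(congr1 val) /= e; apply: val_inj.
have gs0 : forall i, g i \in s0 by move=> i; apply: enum_valP.
pose sg := g @: [set: 'I_n.+1].
have sgK : sg \in K by apply: dc s0K _; apply/subsetP => u /imsetP [i _ ->].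
pose gi (u : V) : 'I_n.+1 := odflt ord0 [pick i | g i == u].
have giK : forall i, gi (g i) = i.
  move=> i; rewrite /gi; case: pickP => [j /eqP /g_inj -> //|].
  by move/(_ i); rewrite eqxx.
have gi_inj : {in sg &, injective gi}.
  by move=> u v /imsetP [i _ ->] /imsetP [j _ ->]; rewrite !giK => ->.
pose Q := \matrix_(i < n.+1) lam (g i).
have uQ : Q \in unitmx.
  rewrite -row_free_unit; apply: inj_row_free => v vQ.
  have hi := ns _ sgK (fun u => v 0 (gi u)).
  have : \sum_(u in sg) v 0 (gi u) *: lam u = 0.
    rewrite big_imset /=; last by move=> i j _ _; apply: g_inj.
    rewrite -[RHS]vQ mulmx_sum_row; apply: eq_big => [i|i _]; first by rewrite inE.
    by rewrite giK rowK.
  move/hi => h; apply/rowP => i; rewrite mxE.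
  by have := h (g i) (imset_f _ (in_setT i)); rewrite giK.
have [Qt [uQt mQt]] := lift_unit uQ.
pose y v := lam v *m invmx Q.
have yg : forall i, y (g i) = delta_mx 0 i.
  move=> i; rewrite /y -[lam (g i)](rowK (fun i => lam (g i)) i) -row_mul.
  by rewrite mulmxV // row1.
pose lamt v := map_mx l2 (y v) *m Qt.
exists lamt; split; last first.
  move=> v; rewrite /mod2 /lamt.
  change (map_mx r2 (map_mx l2 (y v) *m Qt) = lam v).
  by rewrite map_mxM map_l2K mQt /y mulmxKV.
move=> s sK.
have indy : lin_indep s y.
  move=> c hc; apply: (ns _ sK c); have := congr1 (mulmx^~ Q) hc.
  rewrite /= mul0mx mulmx_suml => h; rewrite -[RHS]h; apply: eq_bigr => v _.
  by rewrite -scalemxAl /y mulmxKV.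
have Hy : forall v, v \in sg -> y v = delta_mx 0 (gi v).
  by move=> v /imsetP [i _ ->]; rewrite giK yg.
set L := enum (s :\: sg).
have [W [pos [dW rW ipos eW gpos]]] : exists W pos, @inv _ _ _ y s sg gi L W pos.
  by apply: (@inv_all _ _ _ y s sg gi indy gi_inj Hy L (enum_uniq _)) => x; rewrite mem_enum.
have plcs : forall v, v \in s -> v \in plc s sg L.
  move=> v vs; rewrite inE vs /= mem_enum inE vs andbT.
  by case: (v \in sg).
pose M0 := map_mx l2 W.
pose H := pos @: (s :\: sg).
have cH : (#|H| <= 3)%N.
  apply: leq_trans (leq_imset_card _ _) _.
  have : (s :\: sg) \subset ~: sg by rewrite setDE subsetIr.
  have csg : #|sg| = n.+1 by rewrite card_imset // cardsT card_ord.
  have := cardsC sg; rewrite csg => hc.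
  move/subset_leq_card => h; lia.
have zM : zo M0.
  by move=> i j; rewrite mxE /l2; case: (F2_cases (W i j)) => ->; [left|right].
have lM : forall i, i \notin H -> light M0 i.
  move=> i iH; have ei : row i W = delta_mx 0 i.
    apply: eW => v vL; apply: contraNneq iH => <-; apply: imset_f.
    by rewrite -mem_enum.
  have Wij j : W i j = (i == j)%:R by move/rowP: ei => /(_ j); rewrite !mxE eqxx eq_sym.
  move=> j1 j2; rewrite !mxE !Wij.
  have l0 : l2 false%:R = 0 by [].
  by case: (i =P j1) => [<-|_]; case: (i =P j2) => [<-|_] //; rewrite l0 eqxx.
have uM0 : M0 \in unitmx.
  by apply: (det_unit zM cH lM); rewrite -det_r2 map_l2K.
exists (M0 *m Qt), pos; split; first by rewrite unitmx_mul uM0 uQt.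
split; first by move=> u v us vs; apply: ipos; exact: plcs.
by move=> v vs; rewrite row_mul /M0 -map_row rW ?plcs.
Qed.
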